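(* Let $\theta$ be a congruence of a fuzzy automaton $\mathcal F=(A,X,f)$. Then for each $i\in\{1,2,3\}$, $D_i(\mathcal F)\subseteq D_i(\mathcal F/\theta)$, and if $\mathcal F$ is D$i$-directable, then so is $\mathcal F/\theta$.
   Context: A fuzzy automaton is a triple $\mathcal F=(A,X,f)$ with $A$ a finite nonempty set of states, $X$ a finite nonempty alphabet, and $f:A\times X\times A\to[0,1]$, extended to words by $f^*(a,\varepsilon,a)=1$, $f^*(a,\varepsilon,b)=0$ ($b\neq a$), $f^*(a,vx,b)=\max_{c\in A}\min\{f^*(a,v,c),f(c,x,b)\}$. Let $\mathcal F(a,w)=\{b\in A\mid f^*(a,w,b)>0\}$. A word $w\in X^*$ is D1-directing for $\mathcal F$ if there is $c\in A$ with $\mathcal F(a,w)=\{c\}$ for all $a\in A$; D2-directing if $\mathcal F(a,w)=\mathcal F(b,w)$ for all $a,b\in A$; D3-directing if there is $c\in A$ with $c\in\mathcal F(a,w)$ for all $a\in A$. $D_i(\mathcal F)$ is the set of D$i$-directing words, and $\mathcal F$ is D$i$-directable if $D_i(\mathcal F)\neq\emptyset$. A congruence of $\mathcal F$ is an equivalence relation $\theta$ on $A$ such that whenever $a\,\theta\,a'$, then for all $x\in X$ and $b\in A$, $\max\{f(a,x,b')\mid b'\in[b]\}=\max\{f(a',x,b')\mid b'\in[b]\}$, where $[b]$ is the $\theta$-class of $b$. The quotient automaton is $\mathcal F/\theta=(A/\theta,X,f_\theta)$ with $f_\theta([a],x,[b])=\max\{f(a',x,b')\mid a'\in[a],\ b'\in[b]\}$.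 *)

(* Defs.v *)
From HB Require Import structures.
From mathcomp Require Import all_boot all_order all_algebra.
Set Implicit Arguments. Unset Strict Implicit. Unset Printing Implicit Defensive.
Import Order.TTheory GRing.Theory Num.Theory.
Local Open Scope ring_scope.

Section FuzzyAutomata.
Variable R : realDomainType.

(* A fuzzy automaton on states S and alphabet X is a transition function
   f : S -> X -> S -> R, with values in [0,1] (stated as a hypothesis). *)
Definition fuzzy_valued (S X : finType) (f : S -> X -> S -> R) :=
  forall a x b, 0 <= f a x b <= 1.

(* max over a finite set; since all values are >= 0, 0 is a neutral start *)
(* extended transition f^*(a, w, b), defined by f^*(a,eps,b) = [a = b],
   f^*(a, v x, b) = max_c min (f^*(a,v,c), f(c,x,b)) *)
Definition fstep (S X : finType) (f : S -> X -> S -> R) (g : S -> R) (x : X) : S -> R :=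
  fun b => \big[Num.max/0]_(c : S) Num.min (g c) (f c x b).

Definition fstar (S X : finType) (f : S -> X -> S -> R) (a : S) (w : seq X) (b : S) : R :=
  foldl (fstep f) (fun b => (a == b)%:R) w b.

Definition freach (S X : finType) (f : S -> X -> S -> R) (a : S) (w : seq X) : {set S} :=
  [set b | 0 < fstar f a w b].

Definition D1_directing (S X : finType) (f : S -> X -> S -> R) (w : seq X) :=
  exists c : S, forall a : S, freach f a w = [set c].
Definition D2_directing (S X : finType) (f : S -> X -> S -> R) (w : seq X) :=
  forall a b : S, freach f a w = freach f b w.
Definition D3_directing (S X : finType) (f : S -> X -> S -> R) (w : seq X) :=
  exists c : S, forall a : S, c \in freach f a w.

Definition Di_directing (i : nat) (S X : finType) (f : S -> X -> S -> R) (w : seq X) :=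
  match i with
  | 1 => D1_directing f w
  | 2 => D2_directing f w
  | 3 => D3_directing f w
  | _ => False
  end.

Definition Di_directable (i : nat) (S X : finType) (f : S -> X -> S -> R) :=
  exists w : seq X, Di_directing i f w.

Definition eqclass (A : finType) (theta : rel A) (a : A) : {set A} := [set b | theta a b].

Definition is_congruence (A X : finType) (f : A -> X -> A -> R) (theta : rel A) :=
  equivalence_rel theta /\
  forall a a', theta a a' -> forall (x : X) (b : A),
    \big[Num.max/0]_(b' in eqclass theta b) f a x b'
    = \big[Num.max/0]_(b' in eqclass theta b) f a' x b'.

Definition qstate (A : finType) (theta : rel A) :=
  {P : {set A} | [exists a, P == eqclass theta a]}.

Definition fquot (A X : finType) (f : A -> X -> A -> R) (theta : rel A)
  (P : qstate theta) (x : X) (Q : qstate theta) : R :=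
  \big[Num.max/0]_(a' in val P) \big[Num.max/0]_(b' in val Q) f a' x b'.

End FuzzyAutomata.
Arguments fquot {R A X} f theta P x Q.

(* Main.v *)
Require Import Defs.
From HB Require Import structures.
From mathcomp Require Import all_boot all_order all_algebra.
Import Order.TTheory GRing.Theory Num.Theory.
Local Open Scope ring_scope.

Set Implicit Arguments. Unset Strict Implicit.
Section Proofs.
Variable R : realDomainType.

Lemma bigmax_gt0 (I : finType) (P : pred I) (F : I -> R) :
  (0 < \big[Num.max/0]_(i | P i) F i) = [exists i, P i && (0 < F i)].
Proof.
apply/idP/existsP.
  move=> H; case: (boolP [exists i, P i && (0 < F i)]) => [/existsP//|/existsPn Hn].
  exfalso; move: H; rewrite ltNge => /negP; apply.
  apply: (big_ind (fun x => x <= 0)) => //.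
    by move=> x y hx hy; rewrite ge_max hx hy.
  by move=> i Pi; move: (Hn i); rewrite Pi /= -leNgt.
case=> i /andP[Pi Fi]; rewrite (bigD1 i) //= lt_max Fi //.
Qed.

Variables (A X : finType) (f : A -> X -> A -> R) (theta : rel A).
Hypothesis Hc : is_congruence f theta.

Let refl : reflexive theta.
Proof. by case: Hc => /equivalence_relP[]. Qed.
Let ltr : left_transitive theta.
Proof. by case: Hc => /equivalence_relP[]. Qed.

Lemma cls_eq a b : theta a b -> eqclass theta a = eqclass theta b.
Proof. by move=> h; apply/setP => z; rewrite !inE (ltr h). Qed.

Lemma mem_cls a : a \in eqclass theta a.
Proof. by rewrite inE refl. Qed.

Lemma qrepr (P : qstate theta) : exists a, val P = eqclass theta a.
Proof. by have /existsP[a /eqP ->] := valP P; exists a. Qed.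

Lemma qstate_eq (P Q : qstate theta) a : a \in val P -> a \in val Q -> P = Q.
Proof.
move=> hP hQ; apply: val_inj.
have [p ep] := qrepr P; have [q eq'] := qrepr Q.
move: hP hQ; rewrite ep eq' !inE => hp hq.
by rewrite (cls_eq hp) (cls_eq hq).
Qed.

Lemma qstate_in (P : qstate theta) a b : a \in val P -> b \in val P -> theta a b.
Proof.
have [p ->] := qrepr P; rewrite !inE => ha hb.
by rewrite -(ltr ha).
Qed.

Lemma qcl_subproof (a : A) : [exists a', eqclass theta a == eqclass theta a'].
Proof. by apply/existsP; exists a. Qed.

Definition qcl (a : A) : qstate theta :=
  exist _ (eqclass theta a) (qcl_subproof a).

Lemma cong_pos c c' (x : X) (Q : qstate theta) : theta c c' ->
  [exists b, (b \in val Q) && (0 < f c x b)] ->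
  [exists b, (b \in val Q) && (0 < f c' x b)].
Proof.
move=> h; have [q ->] := qrepr Q.
case: Hc => _ /(_ c c' h x q) E.
by rewrite -!bigmax_gt0 E.
Qed.

Lemma qreach (P : qstate theta) a w (Q : qstate theta) : a \in val P ->
  (Q \in freach (fquot f theta) P w) = [exists b, (b \in val Q) && (b \in freach f a w)].
Proof.
move=> aP; elim/last_ind: w Q => [|v x IH] Q.
  rewrite !inE /fstar /= ltr0n lt0b.
  apply/eqP/existsP.
    by move=> <-; exists a; rewrite aP inE /fstar /= eqxx ltr0n.
  case=> b /andP[bQ]; rewrite inE /fstar /= ltr0n lt0b => /eqP ab.
  by apply: (qstate_eq aP); rewrite ab.
rewrite inE /fstar foldl_rcons /fstep bigmax_gt0.
apply/existsP/existsP.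
  case=> P' /andP[_]; rewrite lt_min => /andP[h1].
  rewrite /fquot bigmax_gt0 => /existsP[c' /andP[c'P']].
  rewrite bigmax_gt0 => hq.
  have := IH P'; rewrite inE /fstar h1 => /esym /existsP[c /andP[cP' ca]].
  have := cong_pos (qstate_in c'P' cP') hq.
  case/existsP => b /andP[bQ fb]; exists b; rewrite bQ inE /fstar foldl_rcons /fstep.
  by rewrite bigmax_gt0; apply/existsP; exists c; rewrite lt_min fb andbT; rewrite inE in ca.
case=> b /andP[bQ]; rewrite inE /fstar foldl_rcons /fstep bigmax_gt0.
case/existsP => c /=; rewrite lt_min => /andP[h1 h2].
exists (qcl c); rewrite lt_min /=.
have := IH (qcl c); rewrite inE /fstar => ->.
apply/andP; split.
  by apply/existsP; exists c; rewrite mem_cls inE.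
rewrite /fquot bigmax_gt0; apply/existsP; exists c; rewrite mem_cls /=.
by rewrite bigmax_gt0; apply/existsP; exists b; rewrite bQ.
Qed.

Lemma dir_trans i w : i \in [:: 1%N; 2%N; 3%N] ->
  Di_directing i f w -> Di_directing i (fquot f theta) w.
Proof.
rewrite !inE => /orP[/eqP->|/orP[/eqP->|/eqP->]] /=.
- case=> c Hcw; exists (qcl c) => P; have [a ea] := qrepr P.
  have aP : a \in val P by rewrite ea; exact: mem_cls.
  apply/setP => Q; rewrite (qreach w Q aP) inE.
  apply/existsP/eqP.
    case=> b /andP[bQ]; rewrite Hcw inE => /eqP eb.
    by apply: (qstate_eq bQ); rewrite eb mem_cls.
  by move=> EQ; rewrite EQ /=; exists c; rewrite mem_cls Hcw inE eqxx.
- move=> H P P'; have [a ea] := qrepr P; have [a' ea'] := qrepr P'.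
  have aP : a \in val P by rewrite ea; exact: mem_cls.
  have aP' : a' \in val P' by rewrite ea'; exact: mem_cls.
  apply/setP => Q; apply: (etrans (qreach w Q aP)); apply: esym.
  apply: (etrans (qreach w Q aP')); by rewrite (H a' a).
- case=> c Hcw; exists (qcl c) => P; have [a ea] := qrepr P.
  have aP : a \in val P by rewrite ea; exact: mem_cls.
  by rewrite (qreach w (qcl c) aP); apply/existsP; exists c; rewrite mem_cls Hcw.
Qed.

End Proofs.
Unset Implicit Arguments.

Theorem corollary6p5 (R : realDomainType) (A X : finType)
  (f : A -> X -> A -> R) (theta : rel A) :
  (0 < #|A|)%N -> (0 < #|X|)%N ->
  fuzzy_valued f ->
  is_congruence f theta ->
  forall i : nat, i \in [:: 1%N; 2%N; 3%N] ->
    (forall w : seq X, Di_directing i f w -> Di_directing i (fquot f theta) w) /\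
    (Di_directable i f -> Di_directable i (fquot f theta)).
Proof.
move=> _ _ _ Hc i Hi; split.
  by move=> w; apply: dir_trans.
by case=> w Hw; exists w; apply: dir_trans.
Qed.
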